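(* Let $\tau=\{<\}$ where $<$ is a binary relation symbol. There is a sentence $\varphi$ of $\mathcal L_{\omega,\omega}(\tau)$ such that $\vartheta(\varphi)$ is expressible by a theory of $\mathcal L_{\omega,\omega}(\tau)$ but is not expressible by any single sentence of $\mathcal L_{\omega,\omega}(\tau)$.
   Context: Models are nonempty; a submodel is a substructure (here: any nonempty subset with the induced relation). $\mathcal L_{\omega,\omega}(\tau)$ is ordinary first-order logic with equality. $\mathfrak A\vDash\vartheta(\varphi)$ iff some submodel of $\mathfrak A$ satisfies $\varphi$. $\vartheta(\varphi)$ is expressible by a theory $T$ (resp. a sentence $\chi$) if for every $\tau$-model $\mathfrak A$: $\mathfrak A\vDash\vartheta(\varphi)$ iff $\mathfrak A\vDash T$ (resp. $\mathfrak A\vDash\chi$). *)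

(* Defs.v *)
From Stdlib Require Import PeanoNat.

Inductive form : Type :=
| FLt  : nat -> nat -> form
| FEq  : nat -> nat -> form
| FBot : form
| FNeg : form -> form
| FAnd : form -> form -> form
| FOr  : form -> form -> form
| FImp : form -> form -> form
| FAll : nat -> form -> form
| FEx  : nat -> form -> form.

Fixpoint free (x : nat) (f : form) : Prop :=
  match f with
  | FLt i j | FEq i j => x = i \/ x = j
  | FBot => False
  | FNeg g => free x g
  | FAnd g h | FOr g h | FImp g h => free x g \/ free x h
  | FAll y g | FEx y g => x <> y /\ free x g
  end.

Definition sentence (f : form) : Prop := forall x, ~ free x f.

Record model : Type := Model {
  dom : Type;
  lt_rel : dom -> dom -> Prop;
  dom_inh : inhabited dom }.

Definition upd {A : Type} (v : nat -> A) (x : nat) (a : A) : nat -> A :=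
  fun y => if Nat.eqb y x then a else v y.

Fixpoint sat (M : model) (v : nat -> dom M) (f : form) : Prop :=
  match f with
  | FLt i j => lt_rel M (v i) (v j)
  | FEq i j => v i = v j
  | FBot => False
  | FNeg g => ~ sat M v g
  | FAnd g h => sat M v g /\ sat M v h
  | FOr g h => sat M v g \/ sat M v h
  | FImp g h => sat M v g -> sat M v h
  | FAll y g => forall a : dom M, sat M (upd v y a) g
  | FEx y g => exists a : dom M, sat M (upd v y a) g
  end.

(* M |= f  (for sentences the choice of assignment is irrelevant). *)
Definition models (M : model) (f : form) : Prop := forall v, sat M v f.

Definition sub_inh (M : model) (B : dom M -> Prop) (h : exists x, B x)
  : inhabited {x : dom M | B x} :=
  match h with ex_intro _ x hx => inhabits (exist _ x hx) end.

Definition submodel (M : model) (B : dom M -> Prop) (h : exists x, B x) : model :=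
  Model {x : dom M | B x}
        (fun a b => lt_rel M (proj1_sig a) (proj1_sig b))
        (sub_inh M B h).

Definition theta (phi : form) (M : model) : Prop :=
  exists (B : dom M -> Prop) (h : exists x, B x), models (submodel M B h) phi.

Definition expressible_by_theory (phi : form) (T : form -> Prop) : Prop :=
  (forall psi, T psi -> sentence psi) /\
  forall M : model, theta phi M <-> (forall psi, T psi -> models M psi).

Definition expressible_by_sentence (phi chi : form) : Prop :=
  sentence chi /\ forall M : model, theta phi M <-> models M chi.

(* Main.v *)
Require Import Defs.
From Stdlib Require Import ZArith Lia Bool List.
Local Open Scope Z_scope.
Definition Pt := (bool * Z)%type.
Definition ltP (p q : Pt) : Prop :=
  (fst p = false /\ fst q = true) \/ (fst p = fst q /\ snd p < snd q).
Definition clamp (K x : Z) := Z.max (-K) (Z.min K x).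
Definition sd (K : Z) (p q : Pt) : Z :=
  if Bool.eqb (fst p) (fst q) then clamp K (snd q - snd p)
  else if fst p then -K else K.

Ltac pcrush :=
  repeat match goal with
  | p : Pt |- _ => let a := fresh "s" in let b := fresh "z" in destruct p as [a b]
  end;
  unfold sd, ltP, clamp in *; cbn [fst snd Bool.eqb] in *;
  repeat match goal with
  | b : bool |- _ => destruct b
  end; cbn [fst snd Bool.eqb] in *;
  repeat match goal with
  | H : (_,_) = (_,_) |- _ => injection H; clear H; intros
  | H : _ \/ _ |- _ => destruct H
  | H : _ /\ _ |- _ => destruct H
  | H : false = true |- _ => discriminate H
  | H : true = false |- _ => discriminate H
  end; try discriminate.

Lemma sd_shift K s z d r : 1 <= K -> -K <= d <= K ->
  sd K (s, z + d) r = clamp K (sd (2*K) (s,z) r - d).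
Proof. intros. pcrush; lia. Qed.

Lemma sd_clamp K p q : 1 <= K -> sd K p q = clamp K (sd (2*K) p q).
Proof. intros. destruct p as [s z]. rewrite <- (Z.add_0_r z) at 1. rewrite sd_shift by lia. f_equal; lia. Qed.

Lemma sd_pos K p q : 1 <= K -> (ltP p q <-> 0 < sd K p q).
Proof. intros. pcrush; split; intros; pcrush; try lia; auto. Qed.

Lemma sd_zero K p q : 1 <= K -> (p = q <-> sd K p q = 0).
Proof. intros. pcrush; split; intros; pcrush; try lia; try f_equal; lia. Qed.

Lemma sd_anti K p q : 1 <= K -> sd K q p = - sd K p q.
Proof. intros. pcrush; lia. Qed.

Lemma sd_bound K p q : 1 <= K -> -K <= sd K p q <= K.
Proof. intros. pcrush; lia. Qed.

Lemma sd_mono1 K r p a : 1 <= K -> (ltP r p \/ r = p) -> sd K p a <= sd K r a.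
Proof. intros. pcrush; lia. Qed.

Lemma sd_mono2 K a q r : 1 <= K -> (ltP q r \/ q = r) -> sd K a q <= sd K a r.
Proof. intros. pcrush; lia. Qed.

Lemma sd_far K p a q : 1 <= K -> ltP p a -> ltP a q -> sd K p a = K -> sd K a q = K ->
  sd (2*K) p q = 2*K.
Proof. intros. pcrush; lia. Qed.

Lemma sd_near K p a : 1 <= K -> ltP p a -> sd K p a < K ->
  a = (fst p, snd p + sd K p a).
Proof. intros. pcrush; try lia; f_equal; lia. Qed.

Lemma ltP_trans p q r : ltP p q -> ltP q r -> ltP p r.
Proof. intros. pcrush; auto; right; split; auto; lia. Qed.

Lemma ltP_irr p : ~ ltP p p.
Proof. intros H. pcrush; lia. Qed.

Lemma ltP_total p q : ltP p q \/ p = q \/ ltP q p.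
Proof. destruct p as [s z], q as [s' z']; unfold ltP; cbn [fst snd].
  destruct s, s'; try (left; left; auto; fail); try (right; right; left; auto; fail);
  (destruct (Z.lt_trichotomy z z') as [?|[?|?]];
   [left; right; auto| right; left; subst; auto | right; right; right; auto]). Qed.

From Stdlib Require Import Classical.

Lemma sd_near2 K a q : 1 <= K -> ltP a q -> sd K a q < K ->
  a = (fst q, snd q + - sd K a q).
Proof. intros. pcrush; try lia; f_equal; lia. Qed.

Lemma sd_nonneg K x y : 1 <= K -> (ltP x y \/ x = y) -> 0 <= sd K x y.
Proof. intros HK [H|H]. apply (proj1 (sd_pos K x y HK)) in H; lia. rewrite H; rewrite (proj1 (sd_zero K y y HK) eq_refl); lia. Qed.

Definition Inv K (L : list (Pt*Pt)) := forall x y, In x L -> In y L -> sd K (fst x) (fst y) = sd K (snd x) (snd y).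

Lemma list_max (L : list (Pt*Pt)) (P : Pt -> Prop) : (exists x, In x L /\ P (fst x)) ->
  exists x, In x L /\ P (fst x) /\ forall y, In y L -> P (fst y) -> ltP (fst y) (fst x) \/ fst y = fst x.
Proof.
  induction L as [|c L IH]; intros [x [Hx Px]]; [destruct Hx|].
  destruct (classic (exists x, In x L /\ P (fst x))) as [E|NE].
  - destruct (IH E) as [m [Hm [Pm Mm]]].
    destruct (classic (P (fst c))) as [Pc|NPc].
    + destruct (ltP_total (fst c) (fst m)) as [h|[h|h]].
      * exists m; split; [right; auto|split; auto]. intros y [<-|Hy] Py; auto.
      * exists m; split; [right; auto|split; auto]. intros y [<-|Hy] Py; auto.
      * exists c; split; [left; auto|split; auto]. intros y [<-|Hy] Py; auto.
        left. destruct (Mm y Hy Py) as [h'|h']. eapply ltP_trans; eauto. rewrite h'; auto.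
    + exists m; split; [right; auto|split; auto]. intros y [<-|Hy] Py; auto. contradiction.
  - destruct Hx as [<-|Hx]; [|exfalso; apply NE; eauto].
    exists c; split; [left; auto|split; auto]. intros y [<-|Hy] Py; auto. exfalso; apply NE; eauto.
Qed.

Lemma list_min (L : list (Pt*Pt)) (P : Pt -> Prop) : (exists x, In x L /\ P (fst x)) ->
  exists x, In x L /\ P (fst x) /\ forall y, In y L -> P (fst y) -> ltP (fst x) (fst y) \/ fst y = fst x.
Proof.
  induction L as [|c L IH]; intros [x [Hx Px]]; [destruct Hx|].
  destruct (classic (exists x, In x L /\ P (fst x))) as [E|NE].
  - destruct (IH E) as [m [Hm [Pm Mm]]].
    destruct (classic (P (fst c))) as [Pc|NPc].
    + destruct (ltP_total (fst c) (fst m)) as [h|[h|h]].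
      * exists c; split; [left; auto|split; auto]. intros y [<-|Hy] Py; auto.
        left. destruct (Mm y Hy Py) as [h'|h']. eapply ltP_trans; eauto. rewrite h'; auto.
      * exists m; split; [right; auto|split; auto]. intros y [<-|Hy] Py; auto.
      * exists m; split; [right; auto|split; auto]. intros y [<-|Hy] Py; auto.
    + exists m; split; [right; auto|split; auto]. intros y [<-|Hy] Py; auto. contradiction.
  - destruct Hx as [<-|Hx]; [|exfalso; apply NE; eauto].
    exists c; split; [left; auto|split; auto]. intros y [<-|Hy] Py; auto. exfalso; apply NE; eauto.
Qed.

Lemma forth K L lo1 lo2 hi1 hi2 a : 1 <= K -> Inv (2*K) L -> In (lo1,lo2) L -> In (hi1,hi2) L ->
  ltP lo1 a -> ltP a hi1 ->
  exists b, ltP lo2 b /\ ltP b hi2 /\ forall x, In x L -> sd K a (fst x) = sd K b (snd x).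
Proof.
  intros HK HI Hlo Hhi L1 L2.
  assert (H2K : 1 <= 2*K) by lia.
  enough (exists b, forall x, In x L -> sd K a (fst x) = sd K b (snd x)) as [b Hb].
  { exists b; split; [|split]; auto.
    - pose proof (Hb _ Hlo) as E; cbn [fst snd] in E.
      apply (proj2 (sd_pos K _ _ HK)); rewrite (sd_anti K b lo2), <- E, (sd_anti K lo1 a) by lia.
      apply (proj1 (sd_pos K _ _ HK)) in L1; lia.
    - pose proof (Hb _ Hhi) as E; cbn [fst snd] in E.
      apply (proj2 (sd_pos K _ _ HK)); rewrite <- E. apply (proj1 (sd_pos K _ _ HK)); auto. }
  destruct (classic (exists x, In x L /\ fst x = a)) as [[[x1 x2] [Hx Ex]]|NE].
  { cbn [fst] in Ex; subst x1. exists x2. intros y Hy.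
    rewrite (sd_clamp K a), (sd_clamp K x2) by lia. f_equal. apply (HI (a,x2) y); auto. }
  destruct (list_max L (fun t => ltP t a)) as [[p1 p2] [Hp [Pp Mp]]]; [exists (lo1,lo2); auto|].
  destruct (list_min L (fun t => ltP a t)) as [[q1 q2] [Hq [Pq Mq]]]; [exists (hi1,hi2); auto|].
  cbn [fst snd] in *.
  assert (Pos : forall y, In y L -> (ltP (fst y) p1 \/ fst y = p1) \/ (ltP q1 (fst y) \/ fst y = q1)).
  { intros y Hy. destruct (ltP_total (fst y) a) as [h|[h|h]].
    - left; apply Mp; auto.
    - exfalso; apply NE; eauto.
    - right. destruct (Mq y Hy h); auto. }
  pose proof (sd_bound K p1 a HK) as B1. pose proof (sd_bound K a q1 HK) as B2.
  destruct (Z.lt_ge_cases (sd K p1 a) K) as [N1|F1].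
  { set (d := sd K p1 a) in *.
    assert (d > 0) by (apply (proj1 (sd_pos K _ _ HK)) in Pp; lia).
    pose proof (sd_near K p1 a HK Pp N1) as Ea. fold d in Ea.
    exists (fst p2, snd p2 + d). intros y Hy. rewrite Ea.
    destruct p1 as [s1 z1]. cbn [fst snd].
    rewrite !sd_shift by lia. f_equal. f_equal. apply (HI (s1,z1,p2) y); auto. }
  destruct (Z.lt_ge_cases (sd K a q1) K) as [N2|F2].
  { set (e := sd K a q1) in *.
    assert (e > 0) by (apply (proj1 (sd_pos K _ _ HK)) in Pq; lia).
    pose proof (sd_near2 K a q1 HK Pq N2) as Ea. fold e in Ea.
    exists (fst q2, snd q2 + - e). intros y Hy. rewrite Ea.
    destruct q1 as [s1 z1]. cbn [fst snd].
    rewrite !sd_shift by lia. f_equal. f_equal. apply (HI (s1,z1,q2) y); auto. }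
  assert (Fpq : sd (2*K) p1 q1 = 2*K) by (apply sd_far with a; auto; lia).
  exists (fst p2, snd p2 + K). intros y Hy.
  rewrite sd_shift by lia. destruct p2 as [s2 z2]. cbn [fst snd].
  pose proof (HI _ _ Hp Hy) as E; cbn [fst snd] in E; rewrite <- E.
  destruct (Pos y Hy) as [Hl|Hr].
  - pose proof (sd_mono1 K (fst y) p1 a HK Hl).
    pose proof (sd_bound K (fst y) a HK).
    rewrite (sd_anti K) by lia.
    pose proof (sd_nonneg (2*K) (fst y) p1 H2K Hl).
    pose proof (sd_anti (2*K) (fst y) p1 H2K). unfold clamp. lia.
  - assert (Hr' : ltP q1 (fst y) \/ q1 = fst y) by (destruct Hr; auto).
    pose proof (sd_mono2 K a q1 (fst y) HK Hr').
    pose proof (sd_bound K a (fst y) HK).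
    pose proof (sd_mono2 (2*K) p1 q1 (fst y) H2K Hr').
    pose proof (sd_bound (2*K) p1 (fst y) H2K).
    unfold clamp. lia.
Qed.

Local Close Scope Z_scope.
From Stdlib Require Import ProofIrrelevance.

Definition Iv (lo hi : Pt) (H : inhabited {p : Pt | ltP lo p /\ ltP p hi}) : model :=
  Model {p : Pt | ltP lo p /\ ltP p hi} (fun a b => ltP (proj1_sig a) (proj1_sig b)) H.

Fixpoint vars (f : form) : list nat :=
  match f with
  | FLt i j | FEq i j => i :: j :: nil
  | FBot => nil
  | FNeg g => vars g
  | FAnd g h | FOr g h | FImp g h => vars g ++ vars h
  | FAll y g | FEx y g => y :: vars g
  end.

Fixpoint qd (f : form) : nat :=
  match f with
  | FLt _ _ | FEq _ _ | FBot => 0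
  | FNeg g => qd g
  | FAnd g h | FOr g h | FImp g h => Nat.max (qd g) (qd h)
  | FAll _ g | FEx _ g => S (qd g)
  end.

Lemma Inv_add K L a b L' : (1 <= K)%Z -> Inv (2*K) L ->
  (forall x, In x L -> sd K a (fst x) = sd K b (snd x)) ->
  (forall x, In x L' -> In x L \/ x = (a,b)) -> Inv K L'.
Proof.
  intros HK HI Hab HL x y Hx Hy.
  destruct (HL x Hx) as [Ix| ->]; destruct (HL y Hy) as [Iy| ->]; cbn [fst snd].
  - rewrite (sd_clamp K (fst x)), (sd_clamp K (snd x)) by lia. f_equal. auto.
  - rewrite (sd_anti K a (fst x)), (sd_anti K b (snd x)) by lia. f_equal. auto.
  - auto.
  - rewrite (proj1 (sd_zero K a a HK) eq_refl), (proj1 (sd_zero K b b HK) eq_refl); reflexivity.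
Qed.

Definition swp (x : Pt * Pt) : Pt * Pt := (snd x, fst x).

Lemma Inv_swap K L : Inv K L -> Inv K (map swp L).
Proof.
  intros HI x y Hx Hy. apply in_map_iff in Hx as [x' [<- Hx]]. apply in_map_iff in Hy as [y' [<- Hy]].
  cbn. symmetry. auto.
Qed.

Lemma back K L lo1 lo2 hi1 hi2 b : (1 <= K)%Z -> Inv (2*K) L -> In (lo1,lo2) L -> In (hi1,hi2) L ->
  ltP lo2 b -> ltP b hi2 ->
  exists a, ltP lo1 a /\ ltP a hi1 /\ forall x, In x L -> sd K a (fst x) = sd K b (snd x).
Proof.
  intros HK HI Hlo Hhi L1 L2.
  destruct (forth K (map swp L) lo2 lo1 hi2 hi1 b HK (Inv_swap _ _ HI)) as [a [A1 [A2 A3]]]; auto.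
  - apply (in_map swp) in Hlo; exact Hlo.
  - apply (in_map swp) in Hhi; exact Hhi.
  - exists a; split; [|split]; auto. intros x Hx. symmetry. apply (A3 (swp x)). apply in_map; auto.
Qed.

Lemma sig_eq (P : Pt -> Prop) (a b : {p | P p}) : proj1_sig a = proj1_sig b -> a = b.
Proof. destruct a, b; cbn; intros ->; f_equal; apply proof_irrelevance. Qed.

Section EF.
Variables (lo1 hi1 lo2 hi2 : Pt).
Variables (H1 : inhabited {p : Pt | ltP lo1 p /\ ltP p hi1}) (H2 : inhabited {p : Pt | ltP lo2 p /\ ltP p hi2}).
Let M1 := Iv lo1 hi1 H1.
Let M2 := Iv lo2 hi2 H2.
Variable Sv : list nat.

Definition KK (k : nat) : Z := (2 ^ Z.of_nat k)%Z.

Lemma KK_pos k : (1 <= KK k)%Z.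
Proof. unfold KK. pose proof (Z.pow_pos_nonneg 2 (Z.of_nat k)). lia. Qed.

Lemma KK_S k : KK (S k) = (2 * KK k)%Z.
Proof. unfold KK. rewrite Nat2Z.inj_succ, Z.pow_succ_r by lia. reflexivity. Qed.

Definition LL (v : nat -> dom M1) (w : nat -> dom M2) :=
  (lo1,lo2) :: (hi1,hi2) :: map (fun s => (proj1_sig (v s), proj1_sig (w s))) Sv.

Definition Rel k v w := Inv (KK k) (LL v w).

Lemma LL_upd v w y (a : dom M1) (b : dom M2) x :
  In x (LL (upd v y a) (upd w y b)) -> In x (LL v w) \/ x = (proj1_sig a, proj1_sig b).
Proof.
  unfold LL. intros [H|[H|H]]; [left; left; auto|left; right; left; auto|].
  apply in_map_iff in H as [s [<- Hs]]. unfold upd. destruct (Nat.eqb s y).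
  - right; auto.
  - left; right; right. apply in_map_iff. exists s; auto.
Qed.

Lemma Rel_forth k v w y (a : dom M1) : Rel (S k) v w -> exists b, Rel k (upd v y a) (upd w y b).
Proof.
  intros HR. unfold Rel in HR. rewrite KK_S in HR.
  destruct a as [a [Pa Qa]].
  destruct (forth (KK k) (LL v w) lo1 lo2 hi1 hi2 a (KK_pos k) HR) as [b [B1 [B2 B3]]]; auto.
  { left; auto. } { right; left; auto. }
  exists (exist _ b (conj B1 B2)). eapply Inv_add; [apply KK_pos|exact HR|exact B3|].
  intros x Hx. apply LL_upd in Hx. exact Hx.
Qed.

Lemma Rel_back k v w y (b : dom M2) : Rel (S k) v w -> exists a, Rel k (upd v y a) (upd w y b).
Proof.
  intros HR. unfold Rel in HR. rewrite KK_S in HR.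
  destruct b as [b [Pb Qb]].
  destruct (back (KK k) (LL v w) lo1 lo2 hi1 hi2 b (KK_pos k) HR) as [a [A1 [A2 A3]]]; auto.
  { left; auto. } { right; left; auto. }
  exists (exist _ a (conj A1 A2)). eapply Inv_add; [apply KK_pos|exact HR|exact A3|].
  intros x Hx. apply LL_upd in Hx. exact Hx.
Qed.

Lemma Rel_in k v w i : Rel k v w -> In i Sv ->
  In (proj1_sig (v i), proj1_sig (w i)) (LL v w).
Proof. intros _ H. right; right. apply in_map_iff. exists i; auto. Qed.

Lemma EF : forall f k v w, incl (vars f) Sv -> qd f <= k -> Rel k v w ->
  (sat M1 v f <-> sat M2 w f).
Proof.
  induction f; intros k v w Hinc Hq HR; cbn [sat vars qd] in *.
  - assert (Hi : In n Sv) by (apply Hinc; left; auto).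
    assert (Hj : In n0 Sv) by (apply Hinc; right; left; auto).
    pose proof (HR _ _ (Rel_in k v w n HR Hi) (Rel_in k v w n0 HR Hj)) as E. cbn [fst snd] in E.
    cbn. rewrite (sd_pos (KK k) _ _ (KK_pos k)), (sd_pos (KK k) (proj1_sig (w n)) _ (KK_pos k)), E. tauto.
  - assert (Hi : In n Sv) by (apply Hinc; left; auto).
    assert (Hj : In n0 Sv) by (apply Hinc; right; left; auto).
    pose proof (HR _ _ (Rel_in k v w n HR Hi) (Rel_in k v w n0 HR Hj)) as E. cbn [fst snd] in E.
    split; intros Heq.
    + apply sig_eq. apply (sd_zero (KK k) _ _ (KK_pos k)). rewrite <- E.
      apply (sd_zero (KK k) _ _ (KK_pos k)). rewrite Heq; auto.
    + apply sig_eq. apply (sd_zero (KK k) _ _ (KK_pos k)). rewrite E.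
      apply (sd_zero (KK k) _ _ (KK_pos k)). rewrite Heq; auto.
  - tauto.
  - rewrite (IHf k v w); auto. tauto.
  - assert (incl (vars f1) Sv) by (intros x Hx; apply Hinc, in_or_app; auto).
    assert (incl (vars f2) Sv) by (intros x Hx; apply Hinc, in_or_app; auto).
    rewrite (IHf1 k v w), (IHf2 k v w); auto; try lia. tauto.
  - assert (incl (vars f1) Sv) by (intros x Hx; apply Hinc, in_or_app; auto).
    assert (incl (vars f2) Sv) by (intros x Hx; apply Hinc, in_or_app; auto).
    rewrite (IHf1 k v w), (IHf2 k v w); auto; try lia. tauto.
  - assert (incl (vars f1) Sv) by (intros x Hx; apply Hinc, in_or_app; auto).
    assert (incl (vars f2) Sv) by (intros x Hx; apply Hinc, in_or_app; auto).
    rewrite (IHf1 k v w), (IHf2 k v w); auto; try lia. tauto.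
  - destruct k as [|k]; [lia|].
    assert (incl (vars f) Sv) by (intros x Hx; apply Hinc; right; auto).
    split; intros Hall a.
    + destruct (Rel_back k v w n a HR) as [a' Ha'].
      rewrite <- (IHf k (upd v n a') (upd w n a)); auto; lia.
    + destruct (Rel_forth k v w n a HR) as [b' Hb'].
      rewrite (IHf k (upd v n a) (upd w n b')); auto; lia.
  - destruct k as [|k]; [lia|].
    assert (incl (vars f) Sv) by (intros x Hx; apply Hinc; right; auto).
    split; intros [a Ha].
    + destruct (Rel_forth k v w n a HR) as [b' Hb'].
      exists b'. rewrite <- (IHf k (upd v n a) (upd w n b')); auto; lia.
    + destruct (Rel_back k v w n a HR) as [a' Ha'].
      exists a'. rewrite (IHf k (upd v n a') (upd w n a)); auto; lia.
Qed.
End EF.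

Lemma sat_ext (M : model) : forall f (v v' : nat -> dom M),
  (forall x, free x f -> v x = v' x) -> (sat M v f <-> sat M v' f).
Proof.
  induction f; intros v v' Hv; cbn [sat free] in *.
  - rewrite (Hv n), (Hv n0); auto; tauto.
  - rewrite (Hv n), (Hv n0); auto; tauto.
  - tauto.
  - rewrite (IHf v v'); auto; tauto.
  - rewrite (IHf1 v v'), (IHf2 v v'); auto; tauto.
  - rewrite (IHf1 v v'), (IHf2 v v'); auto; tauto.
  - rewrite (IHf1 v v'), (IHf2 v v'); auto; tauto.
  - split; intros H a; [rewrite <- (IHf (upd v n a) (upd v' n a))|rewrite (IHf (upd v n a) (upd v' n a))]; auto;
    intros x Hx; unfold upd; destruct (Nat.eqb x n) eqn:E; auto; apply Hv; split; auto;
    apply Nat.eqb_neq; auto.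
  - split; intros [a H]; exists a; [rewrite <- (IHf (upd v n a) (upd v' n a))|rewrite (IHf (upd v n a) (upd v' n a))]; auto;
    intros x Hx; unfold upd; destruct (Nat.eqb x n) eqn:E; auto; apply Hv; split; auto;
    apply Nat.eqb_neq; auto.
Qed.

Lemma sentence_models (M : model) f v : sentence f -> sat M v f -> models M f.
Proof. intros Hs H v'. apply (sat_ext M f v v'); auto. intros x Hx; destruct (Hs x Hx). Qed.

Definition LOax : form :=
  FAnd (FAll 0 (FNeg (FLt 0 0)))
   (FAnd (FAll 0 (FAll 1 (FAll 2 (FImp (FAnd (FLt 0 1) (FLt 1 2)) (FLt 0 2)))))
         (FAll 0 (FAll 1 (FOr (FLt 0 1) (FOr (FEq 0 1) (FLt 1 0)))))).
Definition NoMax : form := FAll 0 (FEx 1 (FLt 0 1)).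
Definition NoMin : form := FAll 0 (FEx 1 (FLt 1 0)).
Definition phi : form := FOr (FNeg LOax) (FOr NoMax NoMin).

Definition LO (M : model) : Prop :=
  (forall a, ~ lt_rel M a a) /\
  (forall a b c, lt_rel M a b -> lt_rel M b c -> lt_rel M a c) /\
  (forall a b, lt_rel M a b \/ a = b \/ lt_rel M b a).

Lemma sat_LOax M v : sat M v LOax <-> LO M.
Proof. unfold LO; cbn [sat LOax]; unfold upd; cbn. firstorder. Qed.

Lemma sat_NoMax M v : sat M v NoMax <-> forall a, exists b, lt_rel M a b.
Proof. cbn [sat NoMax]; unfold upd; cbn. firstorder. Qed.

Lemma sat_NoMin M v : sat M v NoMin <-> forall a, exists b, lt_rel M b a.
Proof. cbn [sat NoMin]; unfold upd; cbn. firstorder. Qed.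

Lemma sat_phi M v : sat M v phi <-> (~ LO M \/ (forall a, exists b, lt_rel M a b) \/ (forall a, exists b, lt_rel M b a)).
Proof. unfold phi; cbn [sat]. rewrite sat_LOax, sat_NoMax, sat_NoMin. tauto. Qed.

Lemma sentence_phi : sentence phi.
Proof. intros x H. cbn in H. lia. Qed.

Lemma LO_sub M B h : LO M -> LO (submodel M B h).
Proof.
  intros [I [T R]]; split; [|split]; cbn.
  - intros a; apply I.
  - intros a b c; apply T.
  - intros [a Ha] [b Hb]; cbn. destruct (R a b) as [?|[E|?]]; auto.
    right; left. subst b. f_equal. apply proof_irrelevance.
Qed.

Lemma sub_LO M B h : LO (submodel M B h) -> (forall x, B x) -> LO M.
Proof.
  intros [I [T R]] HB; split; [|split].
  - intros a; apply (I (exist _ a (HB a))).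
  - intros a b c; apply (T (exist _ a (HB a)) (exist _ b (HB b)) (exist _ c (HB c))).
  - intros a b. destruct (R (exist _ a (HB a)) (exist _ b (HB b))) as [?|[E|?]]; auto.
    right; left. apply (f_equal (@proj1_sig _ _)) in E. exact E.
Qed.

Section Walk.
Variable M : model.
Notation lt := (lt_rel M).
Definition MaxE (a : dom M) := forall z, ~ lt a z.
Definition MinE (a : dom M) := forall z, ~ lt z a.
Definition SuccE (a b : dom M) := lt a b /\ forall z, ~ (lt a z /\ lt z b).
Fixpoint Walk (a : dom M) (m : nat) : Prop :=
  match m with
  | 0 => MaxE a
  | S m => MaxE a \/ exists b, SuccE a b /\ Walk b m
  end.

Lemma walk_max : LO M -> forall m a, Walk a m -> forall B : dom M -> Prop, (exists y, B y) ->
  (forall y, B y -> y = a \/ lt a y) -> exists c, B c /\ forall y, B y -> ~ lt c y.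
Proof.
  intros [I [T R]]. induction m as [|m IH]; intros a Hw B [y0 Hy0] HB.
  - exists y0; split; auto. intros y Hy. destruct (HB y0 Hy0) as [->|H]; [apply Hw|exfalso; apply (Hw y0 H)].
  - destruct Hw as [Hm|[b [[Hab Hs] Hw]]].
    + exists y0; split; auto. intros y Hy. destruct (HB y0 Hy0) as [->|H]; [apply Hm|exfalso; apply (Hm y0 H)].
    + destruct (classic (exists y, B y /\ (y = b \/ lt b y))) as [E|NE].
      * destruct (IH b Hw (fun y => B y /\ (y = b \/ lt b y)) E) as [c [[Bc Hc] Mc]]; [tauto|].
        exists c; split; auto. intros y Hy Hcy.
        destruct (classic (y = b \/ lt b y)) as [Hb|Hb]; [apply (Mc y); auto|].
        destruct (HB y Hy) as [->|Hay].
        -- destruct Hc as [->|Hbc]; [apply (I a); eauto|]. apply (I a). eauto.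
        -- destruct (R y b) as [?|[?|?]]; [apply (Hs y); auto|tauto|tauto].
      * exists y0; split; auto.
        assert (Ea : forall y, B y -> y = a).
        { intros y Hy. destruct (HB y Hy) as [->|Hay]; auto. exfalso.
          destruct (R y b) as [?|[?|?]]; [apply (Hs y); auto|apply NE; eauto|apply NE; eauto]. }
        rewrite (Ea y0 Hy0). intros y Hy. rewrite (Ea y Hy). apply I.
Qed.

Lemma walk_min : LO M -> forall m a, Walk a m -> forall B : dom M -> Prop, (exists y, B y) ->
  (forall y, B y -> y = a \/ lt a y) -> exists c, B c /\ forall y, B y -> ~ lt y c.
Proof.
  intros [I [T R]]. induction m as [|m IH]; intros a Hw B [y0 Hy0] HB.
  - exists y0; split; auto. intros y Hy. destruct (HB y0 Hy0) as [->|H]; [|exfalso; apply (Hw y0 H)].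
    destruct (HB y Hy) as [->|H']; [apply I|exfalso; apply (Hw y H')].
  - destruct (classic (B a)) as [Ba|NBa].
    { exists a; split; auto. intros y Hy Hya. destruct (HB y Hy) as [->|H]; [apply (I a); auto|apply (I a); eauto]. }
    destruct Hw as [Hm|[b [[Hab Hs] Hw]]].
    + exfalso. destruct (HB y0 Hy0) as [->|H]; [tauto|apply (Hm y0 H)].
    + apply (IH b Hw B); [eauto|]. intros y Hy. destruct (HB y Hy) as [->|Hay]; [tauto|].
      destruct (R y b) as [?|[?|?]]; [exfalso; apply (Hs y); auto|auto|auto].
Qed.

Fixpoint Path (a0 c : dom M) (n : nat) : Prop :=
  match n with
  | 0 => c = a0
  | S n => exists b, Path a0 b n /\ SuccE b c
  end.

Lemma path_walk a0 : forall n c m, Path a0 c n -> Walk c m -> Walk a0 (n + m).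
Proof.
  induction n as [|n IH]; intros c m Hp Hw; cbn in Hp.
  - subst; auto.
  - destruct Hp as [b [Hp Hs]]. replace (S n + m) with (n + S m) by lia.
    apply (IH b); auto. cbn. right. eauto.
Qed.
End Walk.

Definition MaxF i := FAll 0 (FNeg (FLt (S i) 0)).
Definition MinF i := FAll 0 (FNeg (FLt 0 (S i))).
Definition SuccF i j := FAnd (FLt (S i) (S j)) (FAll 0 (FNeg (FAnd (FLt (S i) 0) (FLt 0 (S j))))).
Fixpoint RF (i m : nat) : form :=
  match m with
  | 0 => MaxF i
  | S m => FOr (MaxF i) (FEx (S (S i)) (FAnd (SuccF i (S i)) (RF (S i) m)))
  end.
Definition WF n := FEx 1 (FAnd (MinF 0) (RF 0 n)).
Definition psi n := FOr (FNeg LOax) (FNeg (WF n)).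

Lemma sat_MaxF M v i : sat M v (MaxF i) <-> MaxE M (v (S i)).
Proof. unfold MaxE; cbn [sat MaxF]; unfold upd; cbn. firstorder. Qed.
Lemma sat_MinF M v i : sat M v (MinF i) <-> MinE M (v (S i)).
Proof. unfold MinE; cbn [sat MinF]; unfold upd; cbn. firstorder. Qed.
Lemma sat_SuccF M v i j : sat M v (SuccF i j) <-> SuccE M (v (S i)) (v (S j)).
Proof. unfold SuccE; cbn [sat SuccF]; unfold upd; cbn. firstorder. Qed.

Lemma sat_RF M : forall m i v, sat M v (RF i m) <-> Walk M (v (S i)) m.
Proof.
  induction m as [|m IH]; intros i v; cbn [RF Walk].
  - apply sat_MaxF.
  - cbn [sat]. rewrite sat_MaxF. apply or_iff_compat_l. split.
    + intros [b [H1 H2]]. rewrite sat_SuccF in H1. rewrite IH in H2.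
      unfold upd in *. rewrite Nat.eqb_refl in *.
      replace (Nat.eqb (S i) (S (S i))) with false in * by (symmetry; apply Nat.eqb_neq; lia). eauto.
    + intros [b [H1 H2]]. exists b. rewrite sat_SuccF, IH. unfold upd. rewrite Nat.eqb_refl.
      replace (Nat.eqb (S i) (S (S i))) with false by (symmetry; apply Nat.eqb_neq; lia). auto.
Qed.

Lemma sat_WF M v n : sat M v (WF n) <-> exists a, MinE M a /\ Walk M a n.
Proof.
  unfold WF; cbn [sat]. split; intros [a H]; exists a.
  - rewrite sat_MinF, sat_RF in H. unfold upd in H; cbn in H. auto.
  - rewrite sat_MinF, sat_RF. unfold upd; cbn. auto.
Qed.

Lemma free_RF : forall m i x, free x (RF i m) -> x = S i.
Proof.
  induction m as [|m IH]; intros i x H; cbn in H.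
  - lia.
  - destruct H as [H|[H1 [[H2|H2]|H2]]]; try lia.
    apply IH in H2; lia.
Qed.

Lemma sentence_psi n : sentence (psi n).
Proof.
  intros x H. cbn [psi free] in H. destruct H as [H|H].
  - cbn in H; lia.
  - cbn [WF free] in H. destruct H as [H1 [H2|H2]].
    + cbn in H2; lia.
    + apply free_RF in H2; lia.
Qed.

Definition T (f : form) : Prop := exists n, f = psi n.

Lemma theta_iff_T M : theta phi M <-> (forall f, T f -> models M f).
Proof.
  split.
  - intros [B [h Hm]] f [n ->] v. cbn [psi sat]. rewrite sat_LOax.
    destruct (classic (LO M)) as [HL|HL]; [right|left; auto].
    rewrite sat_WF. intros [a0 [Ha0 Hw]].
    destruct h as [x0 Bx0] eqn:Eh.
    specialize (Hm (fun _ => exist _ x0 Bx0)). rewrite sat_phi in Hm.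
    assert (Hall : forall y, B y -> y = a0 \/ lt_rel M a0 y).
    { intros y _. destruct HL as [_ [_ R]]. destruct (R a0 y) as [?|[?|?]]; auto. exfalso; eapply Ha0; eauto. }
    destruct Hm as [Hm|[Hm|Hm]].
    + apply Hm. subst h. apply LO_sub; auto.
    + destruct (walk_max M HL n a0 Hw B (ex_intro _ x0 Bx0) Hall) as [c [Bc Mc]].
      destruct (Hm (exist _ c Bc)) as [[d Bd] Hd]. cbn in Hd. apply (Mc d); auto.
    + destruct (walk_min M HL n a0 Hw B (ex_intro _ x0 Bx0) Hall) as [c [Bc Mc]].
      destruct (Hm (exist _ c Bc)) as [[d Bd] Hd]. cbn in Hd. apply (Mc d); auto.
  - intros HT.
    destruct (dom_inh M) as [x0].
    assert (HW : forall n, LO M -> ~ exists a, MinE M a /\ Walk M a n).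
    { intros n HL. specialize (HT (psi n) (ex_intro _ n eq_refl) (fun _ => x0)).
      cbn [psi sat] in HT. rewrite sat_LOax, sat_WF in HT. tauto. }
    set (hT := ex_intro (fun x => True) x0 I).
    destruct (classic (LO M)) as [HL|HL].
    2:{ exists (fun _ => True), hT. intros v. rewrite sat_phi. left.
        intros HS. apply HL. apply (sub_LO M _ hT HS). auto. }
    destruct (classic (exists a, MinE M a)) as [[a0 Ha0]|NMin].
    2:{ exists (fun _ => True), hT. intros v. rewrite sat_phi. right; right.
        intros [a Ha]. apply NNPP. intros Hn. apply NMin. exists a. intros z Hz.
        apply Hn. exists (exist _ z I). exact Hz. }
    set (Reach := fun c => exists n, Path M a0 c n).
    assert (hR : exists c, Reach c) by (exists a0, 0; reflexivity).
    destruct (classic (forall c, Reach c -> exists d, Reach d /\ lt_rel M c d)) as [Hr|Hr].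
    { exists Reach, hR. intros v. rewrite sat_phi. right; left.
      intros [c Hc]. destruct (Hr c Hc) as [d [Hd Hcd]]. exists (exist _ d Hd). exact Hcd. }
    apply not_all_ex_not in Hr as [c Hc].
    apply imply_to_and in Hc as [[n Hn] Hc].
    assert (Hc' : forall d, Reach d -> ~ lt_rel M c d) by (intros d Hd Hcd; apply Hc; eauto).
    destruct (classic (MaxE M c)) as [Hm|Hm].
    { exfalso. apply (HW (n + 0) HL). exists a0. split; auto.
      apply (path_walk M a0 n c 0 Hn). exact Hm. }
    assert (hU : exists y, lt_rel M c y).
    { apply NNPP. intros H. apply Hm. intros z Hz. apply H; eauto. }
    destruct (classic (exists d, lt_rel M c d /\ forall y, lt_rel M c y -> ~ lt_rel M y d)) as [[d [Hcd Hd]]|NU].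
    { exfalso. apply (Hc' d); auto. exists (S n). cbn. exists c. split; auto.
      split; auto. intros z [H1 H2]. apply (Hd z); auto. }
    exists (fun y => lt_rel M c y), hU. intros v. rewrite sat_phi. right; right.
    intros [a Ha]. apply NNPP. intros Hn'. apply NU. exists a. split; auto.
    intros y Hy Hya. apply Hn'. exists (exist _ y Hy). exact Hya.
Qed.

Lemma LO_Iv lo hi H : LO (Iv lo hi H).
Proof.
  split; [|split]; cbn.
  - intros a; apply ltP_irr.
  - intros a b c; apply ltP_trans.
  - intros a b. destruct (ltP_total (proj1_sig a) (proj1_sig b)) as [?|[E|?]]; auto.
    right; left. apply sig_eq; auto.
Qed.

Definition lo0 : Pt := (false, (-1)%Z).

Ltac lcrush :=
  repeat match goal with
  | p : Pt |- _ => let a := fresh "s" in let b := fresh "z" in destruct p as [a b]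
  | b : bool |- _ => destruct b
  end;
  unfold ltP, lo0 in *; cbn [fst snd] in *;
  repeat match goal with
  | H : (_,_) = (_,_) |- _ => injection H; clear H; intros
  | H : _ \/ _ |- _ => destruct H
  | H : _ /\ _ |- _ => destruct H
  | H : false = true |- _ => discriminate H
  | H : true = false |- _ => discriminate H
  end; try discriminate.

Section FModel.
Variable K : Z.
Variable HF : inhabited {p : Pt | ltP lo0 p /\ ltP p (false, K)}.
Let F := Iv lo0 (false, K) HF.

Lemma F_pt (p : dom F) : exists z, proj1_sig p = (false, z) /\ (0 <= z < K)%Z.
Proof. destruct p as [p [P1 P2]]; cbn. lcrush; exists z; split; auto; lia. Qed.

Lemma F_max (p : dom F) z : proj1_sig p = (false, z) -> (K - 1 <= z)%Z -> MaxE F p.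
Proof.
  intros Ep Hz q Hq. destruct (F_pt q) as [z' [Eq Hz']]. cbn in Hq. rewrite Ep, Eq in Hq.
  lcrush; lia.
Qed.

Lemma F_walk : forall m (p : dom F) z, proj1_sig p = (false, z) -> (K - 1 - Z.of_nat m <= z)%Z -> Walk F p m.
Proof.
  induction m as [|m IH]; intros p z Ep Hz.
  - apply (F_max p z); auto; lia.
  - cbn [Walk]. destruct (Z.le_gt_cases (K-1) z) as [Hk|Hk].
    + left; apply (F_max p z); auto.
    + right. destruct (F_pt p) as [z0 [E0 H0]]. rewrite Ep in E0. injection E0 as <-.
      assert (B1 : ltP lo0 (false, (z+1)%Z)) by (unfold ltP, lo0; cbn; right; split; auto; lia).
      assert (B2 : ltP (false, (z+1)%Z) (false, K)) by (unfold ltP; cbn; right; split; auto; lia).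
      exists (exist _ (false, (z+1)%Z) (conj B1 B2)). split.
      * split; cbn; [rewrite Ep; unfold ltP; cbn; right; split; auto; lia|].
        intros q [Q1 Q2]. destruct (F_pt q) as [z' [Eq Hz']]. rewrite Ep, Eq in *.
        lcrush; lia.
      * apply (IH _ (z+1)%Z); cbn; auto. lia.
Qed.

Lemma F_not_theta (HK : (1 <= K)%Z) : ~ theta phi F.
Proof.
  intros [B [h Hm]].
  assert (P1 : ltP lo0 (false, 0%Z)) by (unfold ltP, lo0; cbn; right; split; auto; lia).
  assert (P2 : ltP (false, 0%Z) (false, K)) by (unfold ltP; cbn; right; split; auto; lia).
  set (p0 := exist (fun p => ltP lo0 p /\ ltP p (false, K)) (false, 0%Z) (conj P1 P2) : dom F).
  assert (Hw : Walk F p0 (Z.to_nat K)) by (apply (F_walk _ p0 0%Z); auto; lia).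
  assert (Hall : forall y, B y -> y = p0 \/ lt_rel F p0 y).
  { intros y _. destruct (F_pt y) as [z [Ey Hy]].
    destruct (Z.eq_dec z 0) as [->|Hz]; [left; apply sig_eq; auto|right].
    cbn. rewrite Ey. unfold ltP; cbn; right; split; auto; lia. }
  destruct h as [x0 Bx0] eqn:Eh.
  specialize (Hm (fun _ => exist _ x0 Bx0)). rewrite sat_phi in Hm.
  destruct Hm as [Hm|[Hm|Hm]].
  + apply Hm. apply LO_sub. apply LO_Iv.
  + destruct (walk_max F (LO_Iv _ _ _) _ p0 Hw B (ex_intro _ x0 Bx0) Hall) as [c [Bc Mc]].
    destruct (Hm (exist _ c Bc)) as [[d Bd] Hd]. cbn in Hd. apply (Mc d); auto.
  + destruct (walk_min F (LO_Iv _ _ _) _ p0 Hw B (ex_intro _ x0 Bx0) Hall) as [c [Bc Mc]].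
    destruct (Hm (exist _ c Bc)) as [[d Bd] Hd]. cbn in Hd. apply (Mc d); auto.
Qed.
End FModel.

Definition hiG : Pt := (true, 0%Z).

Lemma G_theta H : theta phi (Iv lo0 hiG H).
Proof.
  assert (P1 : ltP lo0 (false, 0%Z)) by (unfold ltP, lo0; cbn; right; split; auto; lia).
  assert (P2 : ltP (false, 0%Z) hiG) by (unfold ltP, hiG; cbn; left; split; auto).
  exists (fun p => fst (proj1_sig p) = false).
  assert (hB : exists x : dom (Iv lo0 hiG H), fst (proj1_sig x) = false)
    by (exists (exist _ (false, 0%Z) (conj P1 P2)); reflexivity).
  exists hB.
  intros v. rewrite sat_phi. right; left.
  intros [[[s z] [Q1 Q2]] Bs]. cbn in Bs. subst s.
  assert (R1 : ltP lo0 (false, (z+1)%Z)) by (unfold ltP, lo0 in *; cbn in *; right; split; auto; lcrush; lia).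
  assert (R2 : ltP (false, (z+1)%Z) hiG) by (unfold ltP, hiG; cbn; left; split; auto).
  exists (exist (fun p : dom (Iv lo0 hiG H) => fst (proj1_sig p) = false)
            (exist (fun p => ltP lo0 p /\ ltP p hiG) (false, (z+1)%Z) (conj R1 R2)) eq_refl).
  cbn. unfold ltP; cbn; right; split; auto; lia.
Qed.

Theorem proposition1 :
  exists phi : form,
    sentence phi /\
    (exists T : form -> Prop, expressible_by_theory phi T) /\
    ~ (exists chi : form, expressible_by_sentence phi chi).
Proof.
  exists phi. split; [exact sentence_phi|split].
  - exists T. split.
    + intros f [n ->]. apply sentence_psi.
    + apply theta_iff_T.
  - intros [chi [Hs Hchi]].
    set (k := qd chi). set (K := KK k).
    assert (HK : (1 <= K)%Z) by apply KK_pos.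
    assert (P1 : ltP lo0 (false, 0%Z)) by (unfold ltP, lo0; cbn; right; split; auto; lia).
    assert (P2 : ltP (false, 0%Z) (false, K)) by (unfold ltP; cbn; right; split; auto; lia).
    assert (P3 : ltP (false, 0%Z) hiG) by (unfold ltP, hiG; cbn; left; split; auto).
    set (eF := exist (fun p => ltP lo0 p /\ ltP p (false, K)) (false, 0%Z) (conj P1 P2)).
    set (eG := exist (fun p => ltP lo0 p /\ ltP p hiG) (false, 0%Z) (conj P1 P3)).
    set (HF := inhabits eF). set (HG := inhabits eG).
    apply (F_not_theta K HF HK). apply Hchi.
    assert (MG : models (Iv lo0 hiG HG) chi) by (apply Hchi; apply G_theta).
    apply (sentence_models (Iv lo0 (false, K) HF) chi (fun _ => eF) Hs).
    assert (HR : Rel lo0 (false, K) lo0 hiG HF HG (vars chi) k (fun _ => eF) (fun _ => eG)).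
    { intros x y Hx Hy.
      assert (Hm : forall x, In x (LL lo0 (false, K) lo0 hiG HF HG (vars chi) (fun _ => eF) (fun _ => eG)) ->
                   x = (lo0, lo0) \/ x = ((false, K), hiG) \/ x = ((false, 0%Z), (false, 0%Z))).
      { intros z [<-|[<-|Hz]]; auto. apply in_map_iff in Hz as [s [<- _]]. auto. }
      fold K.
      destruct (Hm x Hx) as [ -> | [ -> | -> ]]; destruct (Hm y Hy) as [ -> | [ -> | -> ]];
        unfold sd, clamp, lo0, hiG; cbn [fst snd Bool.eqb]; lia. }
    apply (proj2 (EF lo0 (false, K) lo0 hiG HF HG (vars chi) chi k (fun _ => eF) (fun _ => eG)
                   (incl_refl _) (le_n _) HR)).
    apply MG.
Qed.
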